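(* For every bipartite quantum channel $\mathcal N\in\mathrm{Ch}(A'B',AB)$, \[ S^{\not\to}_\infty[A|B]_{\mathcal N}=S^\downarrow_\infty(A|R_AR_BB)_{\Phi^{\mathcal N}}. \]
   Context: All systems are finite-dimensional; $\log$ base 2; $\mathrm{St}(X)$ density operators; $\mathrm{Ch}(X',X)$ quantum channels. Maximally entangled state $\Phi_{RX}:=\frac1{|X|}\sum_{i,j}|ii\rangle\langle jj|$; Choi state of $\mathcal N\in\mathrm{Ch}(A'B',AB)$: $\Phi^{\mathcal N}_{R_AAR_BB}:=(\mathrm{id}\otimes\mathcal N)(\Phi_{R_AA'}\otimes\Phi_{R_BB'})$, $R_A\simeq A'$, $R_B\simeq B'$. $D_\infty(\rho\|\sigma):=\log\inf\{\lambda:\rho\le\lambda\sigma\}$; for a channel $\mathcal M$ and CP map $\mathcal M'$, $D_\infty[\mathcal M\|\mathcal M']:=\sup_{\rho\in\mathrm{St}(RX')}D_\infty((\mathrm{id}\otimes\mathcal M)(\rho)\|(\mathrm{id}\otimes\mathcal M')(\rho))$. NS conditional min-entropy: $S^{\not\to}_\infty[A|B]_{\mathcal N}:=-D_\infty[\mathcal N\|\mathcal R^{\mathbb1}_{A\to A}\circ\mathcal N]$, where $(\mathcal R^{\mathbb1}_{A\to A}\circ\mathcal N)(X)=\mathbb 1_A\otimes\operatorname{tr}_A\mathcal N(X)$. For a state $\rho_{XY}$, $S^\downarrow_\infty(X|Y)_\rho:=-D_\infty(\rho_{XY}\|\mathbb 1_X\otimes\rho_Y)$. *)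

(* Defs.v *)
From HB Require Import structures.
From mathcomp Require Import all_boot all_order all_algebra.
From mathcomp Require Import boolp classical_sets reals constructive_ereal ereal exp.
From mathcomp Require Import complex mxtens.

Set Implicit Arguments.
Unset Strict Implicit.
Unset Printing Implicit Defensive.

Import Order.TTheory GRing.Theory Num.Theory.
Local Open Scope ring_scope.

(* Finite-dimensional system of dimension n: operators are 'M[R[i]]_n.
   Composite systems use the Kronecker product *t of mxtens, i.e. the
   basis index of X Y is mxtens_index (x, y) = x * |Y| + y. *)

Section QInfo.
Variable R : realType.
Local Notation C := R[i].

Definition adjmx {m n} (A : 'M[C]_(m, n)) : 'M[C]_(n, m) := (map_mx Num.conj A)^T.

Definition psdmx {n} (A : 'M[C]_n) : Prop :=
  forall v : 'cV[C]_n, 0 <= (adjmx v *m A *m v) 0 0.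

Definition loewner {n} (A B : 'M[C]_n) : Prop := psdmx (B - A).

Definition density {n} (rho : 'M[C]_n) : Prop := psdmx rho /\ \tr rho = 1.

Definition ptrace1 {m n} (A : 'M[C]_(m * n)) : 'M[C]_n :=
  \matrix_(k, l) \sum_(i < m) A (mxtens_index (i, k)) (mxtens_index (i, l)).

Definition mxblock_of {r n} (X : 'M[C]_(r * n)) (i j : 'I_r) : 'M[C]_n :=
  \matrix_(k, l) X (mxtens_index (i, k)) (mxtens_index (j, l)).

Definition idtens (r : nat) {n m} (M : 'M[C]_n -> 'M[C]_m) (X : 'M[C]_(r * n))
  : 'M[C]_(r * m) :=
  \matrix_(p, q) M (mxblock_of X (mxtens_unindex p).1 (mxtens_unindex q).1)
                   (mxtens_unindex p).2 (mxtens_unindex q).2.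
Arguments idtens r {n m} M X.

Definition linear_map {n m} (M : 'M[C]_n -> 'M[C]_m) : Prop :=
  forall (a : C) (X Y : 'M[C]_n), M (a *: X + Y) = a *: M X + M Y.

Definition is_CP {n m} (M : 'M[C]_n -> 'M[C]_m) : Prop :=
  linear_map M /\ forall (r : nat) (X : 'M[C]_(r * n)), psdmx X -> psdmx (idtens r M X).

Definition is_channel {n m} (M : 'M[C]_n -> 'M[C]_m) : Prop :=
  is_CP M /\ forall X : 'M[C]_n, \tr (M X) = \tr X.

(* base-2 logarithm extended to \bar R (log 0 = -oo, log +oo = +oo) *)
Definition elog2 (x : \bar R) : \bar R :=
  match x with
  | +oo%E => +oo%E
  | -oo%E => -oo%E
  | (r%:E)%E => if 0 < r then ((ln r / ln 2)%:E)%E else -oo%E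
  end.

Definition Dmax {n} (rho sigma : 'M[C]_n) : \bar R :=
  elog2 (ereal_inf [set (l%:E)%E | l in [set l : R | loewner rho ((l%:C)%C *: sigma)]]).

Definition Dmax_ch {n m} (M M' : 'M[C]_n -> 'M[C]_m) : \bar R :=
  ereal_sup [set x | exists (r : nat) (rho : 'M[C]_(r * n)),
     density rho /\ x = Dmax (idtens r M rho) (idtens r M' rho)].

(* replacement map R^1_{A->A} o N : X |-> 1_A (x) tr_A N(X), output on A B *)
Definition repl_A {nin a b} (N : 'M[C]_nin -> 'M[C]_(a * b)) (X : 'M[C]_nin)
  : 'M[C]_(a * b) := (1%:M : 'M[C]_a) *t ptrace1 (N X).

Definition S_NS {a' b' a b} (N : 'M[C]_(a' * b') -> 'M[C]_(a * b)) : \bar R :=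
  (- Dmax_ch N (repl_A N))%E.

Definition S_down {x y} (rho : 'M[C]_(x * y)) : \bar R :=
  (- Dmax rho ((1%:M : 'M[C]_x) *t ptrace1 rho))%E.

Definition maxent n : 'M[C]_(n * n) :=
  (n%:R)^-1 *: \sum_(i < n) \sum_(j < n)
     delta_mx (mxtens_index (i, i)) (mxtens_index (j, j)).

Definition relabel {m n} (f : 'I_m -> 'I_n) (X : 'M[C]_n) : 'M[C]_m :=
  \matrix_(i, j) X (f i) (f j).

(* index map for (P Q)(S T) -> (P S)(Q T) reordering *)
Definition swap_mid_idx {p q s t} (k : 'I_((p * s) * (q * t))) : 'I_((p * q) * (s * t)) :=
  let u := (mxtens_unindex k).1 in let v := (mxtens_unindex k).2 in
  mxtens_index (mxtens_index ((mxtens_unindex u).1, (mxtens_unindex v).1),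
                mxtens_index ((mxtens_unindex u).2, (mxtens_unindex v).2)).

Definition swap_mid {p q s t} (X : 'M[C]_((p * q) * (s * t))) : 'M[C]_((p * s) * (q * t)) :=
  relabel (@swap_mid_idx p q s t) X.

(* Choi state Phi^N on R_A A R_B B (ordering (R_A A)(R_B B)):
   Phi_{R_A A'} (x) Phi_{R_B B'} is regrouped as (R_A R_B)(A' B'),
   id_{R_A R_B} (x) N is applied, and the result is regrouped as (R_A A)(R_B B). *)
Definition choi {a' b' a b} (N : 'M[C]_(a' * b') -> 'M[C]_(a * b))
  : 'M[C]_((a' * a) * (b' * b)) :=
  swap_mid (idtens (a' * b') N (swap_mid (maxent a' *t maxent b'))).

(* index map A (R_A (R_B B))  ->  (R_A A)(R_B B) *)
Definition A_first_idx {a' b' a b} (k : 'I_(a * (a' * (b' * b)))) : 'I_((a' * a) * (b' * b)) :=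
  let ia := (mxtens_unindex k).1 in
  let w := (mxtens_unindex k).2 in
  let ra := (mxtens_unindex w).1 in
  let w2 := (mxtens_unindex w).2 in
  mxtens_index (mxtens_index (ra, ia), w2).

(* state on R_A A R_B B viewed as bipartite state on A | (R_A R_B B) *)
Definition A_vs_rest {a' b' a b} (X : 'M[C]_((a' * a) * (b' * b)))
  : 'M[C]_(a * (a' * (b' * b))) :=
  relabel (@A_first_idx a' b' a b) X.

End QInfo.

(* Main.v *)
Require Import Defs.
From HB Require Import structures.
From mathcomp Require Import all_boot all_order all_algebra.
From mathcomp Require Import boolp classical_sets reals constructive_ereal ereal exp.
From mathcomp Require Import complex mxtens spectral sesquilinear.
From mathcomp Require Import ring.
Set Implicit Arguments.
Unset Strict Implicit.
Unset Printing Implicit Defensive.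
Import Order.TTheory GRing.Theory Num.Theory.
Local Open Scope ring_scope.

Section Dec.
Variable R : realType.
Local Notation C := R[i].

Lemma adjmxE m n (A : 'M[C]_(m,n)) : adjmx A = (map_mx Num.conj (A^T)).
Proof. by rewrite /adjmx map_trmx. Qed.

Lemma adjmxD m n (A B : 'M[C]_(m,n)) : adjmx (A + B) = adjmx A + adjmx B.
Proof. by apply/matrixP=> i j; rewrite !mxE rmorphD. Qed.

Lemma adjmxZ m n c (A : 'M[C]_(m,n)) : adjmx (c *: A) = c^* *: adjmx A.
Proof. by apply/matrixP=> i j; rewrite !mxE rmorphM. Qed.

Lemma adjmx_delta n (i : 'I_n) : adjmx (delta_mx i 0 : 'cV[C]_n) = delta_mx 0 i.
Proof.
apply/matrixP=> k l; rewrite !mxE; case: (l == i); case: (k == 0) => /=;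
by rewrite ?rmorph1 ?rmorph0.
Qed.

Lemma form_delta n (A : 'M[C]_n) i j :
  ((delta_mx 0 i : 'rV[C]_n) *m A *m (delta_mx j 0 : 'cV[C]_n)) 0 0 = A i j.
Proof. by rewrite -rowE -colE !mxE. Qed.

Lemma form_deltaM n (A : 'M[C]_n) i j :
  ((delta_mx 0 i : 'rV[C]_n) *m A *m (delta_mx j 0 : 'cV[C]_n)) = (A i j)%:M.
Proof. by apply/matrixP=> x y; rewrite !ord1 -form_delta [RHS]mxE eqxx mulr1n. Qed.

Lemma form_two n (A : 'M[C]_n) i j c :
  let v := (delta_mx i 0 + c *: delta_mx j 0 : 'cV[C]_n) in
  (adjmx v *m A *m v) 0 0 = A i i + c^* * c * A j j + c * A i j + c^* * A j i.
Proof.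
rewrite /= adjmxD adjmxZ !adjmx_delta.
rewrite !(mulmxDl, mulmxDr) -!scalemxAl -!scalemxAr !form_deltaM !mxE eqxx !mulr1n.
by ring. Qed.

Lemma psd_real n (A : 'M[C]_n) (v : 'cV[C]_n) : psdmx A -> ((adjmx v *m A *m v) 0 0)^* = (adjmx v *m A *m v) 0 0.
Proof. by move=> /(_ v) /ger0_real /CrealP. Qed.

Lemma psd_herm_entry n (A : 'M[C]_n) : psdmx A -> forall i j, A i j = (A j i)^*.
Proof.
move=> pA i j.
have h := fun c => psd_real (delta_mx i 0 + c *: delta_mx j 0) pA.
have hi := psd_real (delta_mx i 0 + 0 *: delta_mx i 0) pA.
have hj := psd_real (delta_mx j 0 + 0 *: delta_mx j 0) pA.
rewrite form_two !rmorph0 !(mul0r, mulr0, addr0) in hi.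
rewrite form_two !rmorph0 !(mul0r, mulr0, addr0) in hj.
have h1 := h 1; have h2 := h 'i.
rewrite form_two !rmorph1 !mul1r in h1.
rewrite form_two conjCi in h2.
rewrite !rmorphD !rmorphM /= in h1 h2.
rewrite hi hj rmorphN /= conjCi opprK in h1 h2.
move: h1 h2; set x := A i j; set y := A j i; set p := A i i; set q := A j j.
set I := 'i; move=> h1 h2.
have ii : 1 + I * I = 0 by rewrite -expr2 sqrCi subrr.
have key : (y^* - x) * 2 = ((p + q + x^* + y^*) - (p + q + x + y))
  - I * ((p + I * - I * q + - I * x^* + I * y^*) - (p + - I * I * q + I * x + - I * y))
  - (1 + I * I) * (x^* - y^* + x - y) by ring.
move: key; rewrite h1 h2 ii !subrr mulr0 mul0r !subr0 => /eqP.
rewrite mulf_eq0 pnatr_eq0 orbF subr_eq0 => /eqP ->.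
done.
Qed.

Lemma adjmxM m n p (X : 'M[C]_(m,n)) (Y : 'M[C]_(n,p)) : adjmx (X *m Y) = adjmx Y *m adjmx X.
Proof. by rewrite /adjmx map_mxM trmx_mul. Qed.

Lemma adjmxK m n (X : 'M[C]_(m,n)) : adjmx (adjmx X) = X.
Proof. by apply/matrixP=> i j; rewrite !mxE conjCK. Qed.

Lemma diag_mulmx n (a b : 'rV[C]_n) :
  diag_mx a *m diag_mx b = diag_mx (\row_k (a 0 k * b 0 k)).
Proof.
apply/matrixP=> k l; rewrite !mxE (bigD1 k) //= big1 ?addr0.
  by rewrite !mxE eqxx mulr1n; case: (k =P l) => [->|_]; rewrite ?mulr1n ?mulr0n ?mulr0.
by move=> m /negbTE mk; rewrite !mxE eq_sym mk mulr0n mul0r.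
Qed.

Lemma adjmx_diag n (a : 'rV[C]_n) : adjmx (diag_mx a) = diag_mx (\row_k (a 0 k)^*).
Proof.
apply/matrixP=> k l; rewrite !mxE; case: (k =P l) => [->|/eqP kl];
  by rewrite ?eqxx ?mulr1n // eq_sym (negbTE kl) !mulr0n rmorph0.
Qed.

Lemma psd_decomp n (A : 'M[C]_n) : psdmx A -> exists B : 'M[C]_n, A = B *m adjmx B.
Proof.
move=> pA.
have hA : A \is hermsymmx.
  apply/is_hermitianmxP; rewrite expr0 scale1r; apply/matrixP=> i j.
  by rewrite !mxE; exact: psd_herm_entry.
have /orthomx_spectralP eA := hermitian_normalmx hA.
set P := spectralmx A in eA; set d := spectral_diag A in eA.
have uP : P \is unitarymx by apply: spectral_unitarymx.
have PP : P *m adjmx P = 1%:M by rewrite adjmxE; apply/unitarymxP.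
rewrite invmx_unitary // -adjmxE in eA.
have d0 : forall k, 0 <= d 0 k.
  move=> k; have := pA (adjmx P *m delta_mx k 0).
  rewrite eA adjmxM adjmxK adjmx_delta !mulmxA -(mulmxA _ P) PP mulmx1.
  rewrite -(mulmxA _ P) PP mulmx1 form_delta mxE eqxx mulr1n //.
exists (adjmx P *m diag_mx (\row_k sqrtC (d 0 k))).
rewrite adjmxM adjmxK adjmx_diag !mulmxA -(mulmxA (adjmx P)) diag_mulmx.
rewrite {1}eA; congr (_ *m diag_mx _ *m _); apply/rowP=> k; rewrite !mxE.
by rewrite conj_Creal ?sqrtC_real // -expr2 sqrtCK.
Qed.
End Dec.


Section Choi.
Variable R : realType.
Local Notation C := R[i].

Lemma sum_idx (T : nmodType) a b (F : 'I_(a * b) -> T) :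
  \sum_(K < a * b) F K = \sum_(i < a) \sum_(j < b) F (mxtens_index (i, j)).
Proof.
rewrite pair_big /=.
rewrite (reindex (fun ij : 'I_a * 'I_b => mxtens_index ij)) /=; last first.
  by exists (@mxtens_unindex a b) => x _; rewrite ?mxtens_indexK ?mxtens_unindexK.
by apply: eq_bigr => -[i j].
Qed.

Lemma idtensE r n m (M : 'M[C]_n -> 'M[C]_m) (X : 'M[C]_(r * n)) s k t l :
  idtens (r:=r) M X (mxtens_index (s, k)) (mxtens_index (t, l)) = M (mxblock_of X s t) k l.
Proof. by rewrite /idtens mxE !mxtens_indexK. Qed.

Lemma form_sum n (A : 'M[C]_n) (v : 'cV[C]_n) :
  (adjmx v *m A *m v) 0 0 = \sum_i \sum_j (v i 0)^* * A i j * v j 0.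
Proof.
rewrite [RHS]exchange_big mxE; apply: eq_bigr => j _; rewrite mxE mulr_suml.
by apply: eq_bigr => i _; rewrite !mxE.
Qed.

Lemma psd_congr n m (J : 'M[C]_n) (K : 'M[C]_(n, m)) :
  psdmx J -> psdmx (adjmx K *m J *m K).
Proof.
move=> pJ v; have := pJ (K *m v).
by rewrite adjmxM !mulmxA.
Qed.

Lemma psd_sum n (I : finType) (F : I -> 'M[C]_n) :
  (forall i, psdmx (F i)) -> psdmx (\sum_i F i).
Proof.
move=> pF v; rewrite mulmx_sumr mulmx_suml summxE.
by apply: sumr_ge0 => i _; apply: pF.
Qed.

Lemma linear0 n m (L : 'M[C]_n -> 'M[C]_m) : linear_map L -> L 0 = 0.
Proof.
move=> lL; have := lL 1 0 0; rewrite !scale1r addr0 => h.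
by apply: (addrI (L 0)); rewrite -h addr0.
Qed.

Lemma linearD' n m (L : 'M[C]_n -> 'M[C]_m) : linear_map L -> forall X Y, L (X + Y) = L X + L Y.
Proof. by move=> lL X Y; have := lL 1 X Y; rewrite !scale1r. Qed.

Lemma linearZ' n m (L : 'M[C]_n -> 'M[C]_m) : linear_map L -> forall c X, L (c *: X) = c *: L X.
Proof. by move=> lL c X; rewrite -(addr0 (c *: X)) lL linear0 // addr0. Qed.

Lemma linear_sum n m (L : 'M[C]_n -> 'M[C]_m) (I : finType) (F : I -> 'M[C]_n) :
  linear_map L -> L (\sum_i F i) = \sum_i L (F i).
Proof.
move=> lL; apply: (big_morph L (linearD' lL) (linear0 lL)).
Qed.

Lemma idtens_linear r n m (L : 'M[C]_n -> 'M[C]_m) : linear_map L -> linear_map (idtens (r:=r) L).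
Proof.
move=> lL c X Y; apply/matrixP=> P Q; rewrite !mxE.
have -> : mxblock_of (c *: X + Y) (mxtens_unindex P).1 (mxtens_unindex Q).1 =
  c *: mxblock_of X (mxtens_unindex P).1 (mxtens_unindex Q).1 +
  mxblock_of Y (mxtens_unindex P).1 (mxtens_unindex Q).1.
  by apply/matrixP=> x y; rewrite !mxE.
by rewrite lL !mxE.
Qed.

Definition choiMat n m (L : 'M[C]_n -> 'M[C]_m) : 'M[C]_(n * m) :=
  \matrix_(P, Q) L (delta_mx (mxtens_unindex P).1 (mxtens_unindex Q).1)
     (mxtens_unindex P).2 (mxtens_unindex Q).2.

Lemma sum_id1 m (F : 'I_m -> C) k : \sum_j F j * (1%:M : 'M[C]_m) j k = F k.
Proof.
rewrite (bigD1 k) //= big1 ?addr0; first by rewrite mxE eqxx mulr1.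
by move=> j /negbTE jk; rewrite mxE jk mulr0.
Qed.

Lemma sum_id1' m (F : 'I_m -> C) k : \sum_j (1%:M : 'M[C]_m) j k * F j = F k.
Proof. by rewrite -(sum_id1 F k); apply: eq_bigr => j _; rewrite mulrC. Qed.

Lemma adjmx_entry p q (A : 'M[C]_(p, q)) i j : adjmx A i j = (A j i)^*.
Proof. by rewrite !mxE. Qed.

Lemma congr_tens_entry n r m (J : 'M[C]_(n * m)) (W : 'M[C]_(n, r)) s k t l :
  (adjmx (W *t (1%:M : 'M[C]_m)) *m J *m (W *t (1%:M : 'M[C]_m)))
     (mxtens_index (s, k)) (mxtens_index (t, l)) =
  \sum_q \sum_p (W p s)^* * J (mxtens_index (p, k)) (mxtens_index (q, l)) * W q t.
Proof.
rewrite mxE sum_idx; apply: eq_bigr => q _.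
under eq_bigr => j _ do [rewrite tensmxE mulrA].
rewrite sum_id1 mxE sum_idx mulr_suml; apply: eq_bigr => p _.
under eq_bigr => j _ do [rewrite adjmx_entry tensmxE rmorphM].
rewrite mulr_suml (bigD1 k) //= big1 ?addr0.
  by rewrite mxE eqxx rmorph1 mulr1.
by move=> j /negbTE jk; rewrite mxE jk rmorph0 mulr0 !mul0r.
Qed.

Lemma choi_rank1 r n m (L : 'M[C]_n -> 'M[C]_m) (b : 'cV[C]_(r * n)) :
  linear_map L ->
  idtens (r:=r) L (b *m adjmx b) =
  adjmx ((\matrix_(q, t) (b (mxtens_index (t, q)) 0)^* : 'M[C]_(n, r)) *t (1%:M : 'M[C]_m))
   *m choiMat L *m ((\matrix_(q, t) (b (mxtens_index (t, q)) 0)^* : 'M[C]_(n, r)) *t (1%:M : 'M[C]_m)).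
Proof.
move=> lL; apply/matrixP=> S T.
case: (mxtens_indexP S) => s k; case: (mxtens_indexP T) => t l.
rewrite idtensE congr_tens_entry.
have -> : mxblock_of (b *m adjmx b) s t =
   \sum_p \sum_q (b (mxtens_index (s, p)) 0 * (b (mxtens_index (t, q)) 0)^*) *: delta_mx p q.
  rewrite [LHS]matrix_sum_delta; apply: eq_bigr => p _; apply: eq_bigr => q _.
  by rewrite !mxE big_ord1 !mxE.
rewrite linear_sum // summxE exchange_big /=; apply: eq_bigr => q _.
rewrite linear_sum // summxE; apply: eq_bigr => p _.
rewrite linearZ' // !mxE !mxtens_indexK /= conjCK.
by rewrite mulrAC.
Qed.

Lemma choi_cp r n m (L : 'M[C]_n -> 'M[C]_m) :
  linear_map L -> psdmx (choiMat L) ->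
  forall X : 'M[C]_(r * n), psdmx X -> psdmx (idtens (r:=r) L X).
Proof.
move=> lL pJ X pX; have [B ->] := psd_decomp pX.
have -> : B *m adjmx B = \sum_j (col j B *m adjmx (col j B)).
  apply/matrixP=> i k; rewrite summxE mxE; apply: eq_bigr => j _.
  by rewrite !mxE big_ord1 !mxE.
rewrite (linear_sum _ (idtens_linear lL)).
by apply: psd_sum => j; rewrite choi_rank1 //; apply: psd_congr.
Qed.
End Choi.


Section Main.
Variable R : realType.
Local Notation C := R[i].

Lemma idx_eq m n (i i' : 'I_m) (j j' : 'I_n) :
  (mxtens_index (i, j) == mxtens_index (i', j')) = (i == i') && (j == j').
Proof. by rewrite (inj_eq (can_inj (@mxtens_indexK m n))) xpair_eqE. Qed.

Lemma sum_pick n (i j : 'I_n) :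
  \sum_(k < n) (((i == k) && (j == k))%:R : C) = ((i == j)%:R).
Proof.
rewrite (bigD1 i) //= big1 ?addr0; first by rewrite eqxx /= eq_sym.
by move=> k /negbTE ik; rewrite eq_sym ik.
Qed.

Lemma natr_andb (b1 b2 : bool) : ((b1 && b2)%:R : C) = b1%:R * b2%:R.
Proof. by case: b1; case: b2; rewrite ?mulr1 ?mulr0. Qed.

Lemma maxent_entry n (i j k l : 'I_n) :
  maxent R n (mxtens_index (i, j)) (mxtens_index (k, l)) =
  (n%:R)^-1 * (((i == j) && (k == l))%:R).
Proof.
rewrite mxE summxE; congr (_ * _).
under eq_bigr => x _ do [rewrite summxE; under eq_bigr => y _ do
  [rewrite mxE !idx_eq natr_andb]].
under eq_bigr => x _ do rewrite -mulr_sumr sum_pick.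
by rewrite -mulr_suml sum_pick natr_andb.
Qed.

Definition rho0 a' b' : 'M[C]_((a' * b') * (a' * b')) := swap_mid (maxent R a' *t maxent R b').

Lemma rho0_entry a' b' (p x q y : 'I_(a' * b')) :
  rho0 a' b' (mxtens_index (p, x)) (mxtens_index (q, y)) =
  ((a' * b')%:R)^-1 * (((p == x) && (q == y))%:R).
Proof.
case: (mxtens_indexP p) => p1 p2; case: (mxtens_indexP x) => x1 x2.
case: (mxtens_indexP q) => q1 q2; case: (mxtens_indexP y) => y1 y2.
rewrite /rho0 /swap_mid /relabel mxE /swap_mid_idx !mxtens_indexK /= tensmxE.
rewrite !maxent_entry !idx_eq !natr_andb natrM invfM; ring.
Qed.

Lemma block_rho0 a' b' (p q : 'I_(a' * b')) :
  mxblock_of (rho0 a' b') p q = ((a' * b')%:R)^-1 *: delta_mx p q.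
Proof. by apply/matrixP=> x y; rewrite mxE rho0_entry !mxE (eq_sym x) (eq_sym y). Qed.

Lemma idtens_rho0 a' b' m (L : 'M[C]_(a' * b') -> 'M[C]_m) : linear_map L ->
  idtens (r:=a' * b') L (rho0 a' b') = ((a' * b')%:R)^-1 *: choiMat L.
Proof.
move=> lL; apply/matrixP=> S T.
case: (mxtens_indexP S) => s k; case: (mxtens_indexP T) => t l.
by rewrite idtensE block_rho0 linearZ' // !mxE !mxtens_indexK.
Qed.

Lemma psd_scale n (c : C) (A : 'M[C]_n) : 0 <= c -> psdmx A -> psdmx (c *: A).
Proof.
move=> c0 pA v; rewrite -scalemxAr -scalemxAl mxE mulr_ge0 //.
Qed.

Lemma psd_rank1 n (w : 'cV[C]_n) : psdmx (w *m adjmx w).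
Proof.
move=> v; rewrite !mulmxA -mulmxA.
have -> : adjmx w *m v = adjmx (adjmx v *m w) by rewrite adjmxM adjmxK.
by rewrite mxE big_ord1 adjmx_entry mul_conjC_ge0.
Qed.

Lemma density_rho0 a' b' : (0 < a')%N -> (0 < b')%N -> density (rho0 a' b').
Proof.
move=> ha hb; split.
  pose u : 'cV[C]_((a' * b') * (a' * b')) :=
    \col_K ((mxtens_unindex K).1 == (mxtens_unindex K).2)%:R.
  have -> : rho0 a' b' = ((a' * b')%:R)^-1 *: (u *m adjmx u).
    apply/matrixP=> S T.
    case: (mxtens_indexP S) => p x; case: (mxtens_indexP T) => q y.
    rewrite rho0_entry !mxE big_ord1 !mxE !mxtens_indexK /= rmorph_nat natr_andb.
    by [].
  apply: psd_scale; last exact: psd_rank1.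
  by rewrite invr_ge0 ler0n.
rewrite /mxtrace sum_idx.
under eq_bigr => p _ do [under eq_bigr => x _ do rewrite rho0_entry];
under eq_bigr => p _ do rewrite -mulr_sumr sum_pick eqxx.
rewrite -mulr_sumr sumr_const card_ord -[true%:R]/(1 : C) -[1 *+ _]/((a' * b')%:R) mulVf //.
by rewrite pnatr_eq0 -lt0n muln_gt0 ha hb.
Qed.
End Main.


Section Rel.
Variable R : realType.
Local Notation C := R[i].

Definition relmat m n (f : 'I_m -> 'I_n) : 'M[C]_(n, m) := \matrix_(k, i) ((f i == k)%:R).

Lemma relabel_psd m n (f : 'I_m -> 'I_n) (X : 'M[C]_n) : psdmx X -> psdmx (relabel f X).
Proof.
move=> pX.
have -> : relabel f X = adjmx (relmat f) *m X *m relmat f.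
  apply/matrixP=> i j; rewrite [LHS]mxE [RHS]mxE (bigD1 (f j)) //= big1 ?addr0; last first.
    by move=> k /negbTE kf; rewrite [relmat f k j]mxE eq_sym kf mulr0.
  rewrite [relmat f _ j]mxE eqxx mulr1 mxE (bigD1 (f i)) //= big1 ?addr0; last first.
    by move=> k /negbTE kf; rewrite adjmx_entry mxE eq_sym kf rmorph0 mul0r.
  by rewrite adjmx_entry mxE eqxx rmorph1 mul1r.
exact: psd_congr.
Qed.

Lemma relabel_comp m n p (f : 'I_n -> 'I_p) (g : 'I_m -> 'I_n) (X : 'M[C]_p) :
  relabel g (relabel f X) = relabel (fun k => f (g k)) X.
Proof. by apply/matrixP=> i j; rewrite !mxE. Qed.

Lemma relabel_id n (X : 'M[C]_n) (f : 'I_n -> 'I_n) : (forall k, f k = k) -> relabel f X = X.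
Proof. by move=> fk; apply/matrixP=> i j; rewrite !mxE !fk. Qed.

Lemma relabel_lin m n (f : 'I_m -> 'I_n) c (X Y : 'M[C]_n) :
  relabel f (c *: X - Y) = c *: relabel f X - relabel f Y.
Proof. by apply/matrixP=> i j; rewrite !mxE. Qed.

Section Idx.
Variables a' b' a b : nat.
Definition hidx (k : 'I_(a * (a' * (b' * b)))) : 'I_((a' * b') * (a * b)) :=
  @swap_mid_idx a' b' a b (@A_first_idx a' b' a b k).
Definition gidx (K : 'I_((a' * b') * (a * b))) : 'I_(a * (a' * (b' * b))) :=
  let P := (mxtens_unindex K).1 in let Q := (mxtens_unindex K).2 in
  mxtens_index ((mxtens_unindex Q).1,
    mxtens_index ((mxtens_unindex P).1,
      mxtens_index ((mxtens_unindex P).2, (mxtens_unindex Q).2))).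

Lemma hidxE (i : 'I_a) (ra : 'I_a') (rb : 'I_b') (ib : 'I_b) :
  hidx (mxtens_index (i, mxtens_index (ra, mxtens_index (rb, ib)))) =
  mxtens_index (mxtens_index (ra, rb), mxtens_index (i, ib)).
Proof. by rewrite /hidx /A_first_idx /swap_mid_idx; cbv zeta; rewrite !mxtens_indexK. Qed.

Lemma hgK K : hidx (gidx K) = K.
Proof.
case: (mxtens_indexP K) => P Q; case: (mxtens_indexP P) => ra rb.
case: (mxtens_indexP Q) => i ib.
by rewrite /gidx; cbv zeta; rewrite !mxtens_indexK hidxE.
Qed.
End Idx.

Lemma relabel_back m n (f : 'I_m -> 'I_n) (g : 'I_n -> 'I_m) (X : 'M[C]_n) :
  (forall k, f (g k) = k) -> psdmx (relabel f X) -> psdmx X.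
Proof.
move=> fg /(relabel_psd g); rewrite relabel_comp relabel_id //.
Qed.

End Rel.


Section Fin.
Variable R : realType.
Local Notation C := R[i].

Lemma elog2_le (x y : \bar R) : (x <= y)%E -> (elog2 x <= elog2 y)%E.
Proof.
case: x => [x| |]; case: y => [y| |] //=; rewrite ?leey ?leNye //.
rewrite lee_fin => xy; case: ifP => x0; last by rewrite leNye.
have y0 : 0 < y by apply: lt_le_trans xy.
rewrite y0 lee_fin ler_pM2r; last by rewrite invr_gt0 ln_gt0 // ltr1n.
by rewrite ler_ln // posrE.
Qed.

Lemma Dmax_mono n n' (X Y : 'M[C]_n) (X' Y' : 'M[C]_n') :
  (forall l : R, loewner X' ((l%:C)%C *: Y') -> loewner X ((l%:C)%C *: Y)) ->
  (Dmax X Y <= Dmax X' Y')%E.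
Proof.
move=> H; rewrite /Dmax; apply: elog2_le; apply: le_ereal_inf_tmp => _ [l hl <-].
apply: ge_ereal_inf; exists l%:E => //.
by exists l => //; apply: H.
Qed.

Lemma Dmax_eq n n' (X Y : 'M[C]_n) (X' Y' : 'M[C]_n') :
  (forall l : R, loewner X ((l%:C)%C *: Y) <-> loewner X' ((l%:C)%C *: Y')) ->
  Dmax X Y = Dmax X' Y'.
Proof.
move=> H; apply: le_anti; apply/andP; split; apply: Dmax_mono => l hl.
  exact: (proj2 (H l) hl).
exact: (proj1 (H l) hl).
Qed.
End Fin.


Section M.
Variable R : realType.
Local Notation C := R[i].

Lemma ptrace1E m n (A : 'M[C]_(m * n)) k l :
  ptrace1 A k l = \sum_i A (mxtens_index (i, k)) (mxtens_index (i, l)).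
Proof. by rewrite mxE. Qed.

Lemma relabelE m n (f : 'I_m -> 'I_n) (X : 'M[C]_n) i j : relabel f X i j = X (f i) (f j).
Proof. by rewrite mxE. Qed.

Lemma addmxE' m n (A B : 'M[C]_(m, n)) i j : (A + B) i j = A i j + B i j.
Proof. by rewrite mxE. Qed.
Lemma scalemxE' m n c (A : 'M[C]_(m, n)) i j : (c *: A) i j = c * A i j.
Proof. by rewrite mxE. Qed.

Lemma repl_linear nin a b (N : 'M[C]_nin -> 'M[C]_(a * b)) :
  linear_map N -> linear_map (repl_A N).
Proof.
move=> lN c X Y; rewrite /repl_A lN; apply/matrixP=> S T.
case: (mxtens_indexP S) => i k; case: (mxtens_indexP T) => j l.
rewrite [LHS]tensmxE addmxE' scalemxE' !tensmxE !ptrace1E.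
rewrite !mulr_sumr -big_split; apply: eq_bigr => x _.
by rewrite addmxE' scalemxE' mulrDr mulrCA.
Qed.

Lemma comb_linear n m (M N : 'M[C]_n -> 'M[C]_m) (c : C) :
  linear_map M -> linear_map N -> linear_map (fun X => c *: M X - N X).
Proof.
move=> lM lN d X Y; rewrite lM lN; apply/matrixP=> i j; rewrite !mxE; ring.
Qed.

Lemma idtens_comb r n m (M N : 'M[C]_n -> 'M[C]_m) (c : C) (X : 'M[C]_(r * n)) :
  c *: idtens (r:=r) M X - idtens (r:=r) N X = idtens (r:=r) (fun Y => c *: M Y - N Y) X.
Proof. by apply/matrixP=> i j; rewrite !mxE. Qed.

Lemma repl_relabel a' b' a b (N : 'M[C]_(a' * b') -> 'M[C]_(a * b))
   (X : 'M[C]_((a' * b') * (a' * b'))) :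
  (1%:M : 'M[C]_a) *t ptrace1 (relabel (@hidx a' b' a b) (idtens (r:=a' * b') N X)) =
  relabel (@hidx a' b' a b) (idtens (r:=a' * b') (repl_A N) X).
Proof.
apply/matrixP=> S T.
case: (mxtens_indexP S) => i w; case: (mxtens_indexP w) => ra w2.
case: (mxtens_indexP w2) => rb ib.
case: (mxtens_indexP T) => j w'; case: (mxtens_indexP w') => ra' w2'.
case: (mxtens_indexP w2') => rb' ib'.
rewrite tensmxE ptrace1E relabelE !hidxE idtensE /repl_A tensmxE ptrace1E.
congr (_ * _); apply: eq_bigr => k _.
by rewrite relabelE !hidxE idtensE.
Qed.
End M.


Section T.
Variable R : realType.
Local Notation C := R[i].

Lemma key_equiv a' b' a b (N : 'M[C]_(a' * b') -> 'M[C]_(a * b)) (c : C) :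
  let YN := idtens (r:=a' * b') N (rho0 R a' b') in
  let YM := idtens (r:=a' * b') (repl_A N) (rho0 R a' b') in
  loewner (relabel (@hidx a' b' a b) YN) (c *: relabel (@hidx a' b' a b) YM)
  <-> psdmx (idtens (r:=a' * b') (fun X => c *: repl_A N X - N X) (rho0 R a' b')).
Proof.
move=> YN YM; rewrite /loewner -relabel_lin /YN /YM idtens_comb.
split; first by apply: relabel_back (@hgK a' b' a b).
exact: relabel_psd.
Qed.

End T.

Theorem proposition11 (R : realType) (a' b' a b : nat)
  (ha' : (0 < a')%N) (hb' : (0 < b')%N) (ha : (0 < a)%N) (hb : (0 < b)%N)
  (N : 'M[R[i]]_(a' * b') -> 'M[R[i]]_(a * b)) :
  is_channel N ->
  S_NS N = S_down (A_vs_rest (choi N)).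
Proof.
move=> [[lN _] _].
have eZ : A_vs_rest (choi N) =
    relabel (@hidx a' b' a b) (idtens (r:=a' * b') N (rho0 R a' b')).
  by rewrite /A_vs_rest /choi /swap_mid relabel_comp.
rewrite /S_NS /S_down eZ repl_relabel; congr (- _)%E.
have lM := repl_linear lN.
apply: le_anti; apply/andP; split.
  apply: ge_ereal_sup => _ [r [rho [[prho _] ->]]].
  apply: Dmax_mono => l /key_equiv.
  rewrite idtens_rho0; last exact: comb_linear.
  move/(psd_scale (c := (a' * b')%:R) (ler0n _ _)).
  rewrite scalerA mulfV ?scale1r; last by rewrite pnatr_eq0 -lt0n muln_gt0 ha' hb'.
  move/(choi_cp (comb_linear _ lM lN)) => /(_ r rho prho).
  by rewrite -idtens_comb.
apply: ereal_sup_ubound; exists (a' * b')%N, (rho0 R a' b'); split.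
  exact: density_rho0.
apply: Dmax_eq => l; rewrite key_equiv /loewner idtens_comb.
by [].
Qed.
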